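(* Let $\mathsf{op}_0\mathsf{op}_1\cdots\mathsf{op}_n$ be a nonempty sequence over the alphabet $\{\uparrow_1,\uparrow_2,\downarrow_1,\downarrow_2,\Downarrow\}$ which is valid, i.e. applying the operations successively to the empty order-2 stack $[[\,]]$ is defined at every step. Let $L_1$ and $L_2$ be the languages generated by the nonterminals $S_1$ and $S_2$ of the context-free grammar $$S_1 \to \uparrow_1 \mid S_1\uparrow_2 \mid S_1S_1\downarrow_1 \mid S_1S_2\downarrow_2 \mid S_1S_2S_1\Downarrow,\qquad S_2\to \uparrow_2 \mid S_2\uparrow_1 \mid S_2\downarrow_1 \mid S_2S_2\downarrow_2 \mid S_2S_2S_1\Downarrow .$$ Then for all $0\le i\le j\le n$: (P1) $\mathsf{push}_1(j)=i$ iff $\mathsf{op}_i\cdots\mathsf{op}_j\in L_1$; (P2) $\mathsf{Push}_2(j)=i$ iff $\mathsf{op}_i\cdots\mathsf{op}_j\in L_2$; (P3) $\mathsf{push}_1(j)=-1$ iff $\mathsf{op}_k\cdots\mathsf{op}_j\notin L_1$ for all $0\le k\le j$; (P4) $\mathsf{Push}_2(j)=-1$ iff $\mathsf{op}_k\cdots\mathsf{op}_j\notin L_2$ for all $0\le k\le j$.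
   Context: Order-2 collapsible stacks over a finite set $S$ of stack symbols: an order-2 stack is $W=[[u_1][u_2]\cdots[u_n]]$ ($n\ge1$) where each $u_i$ is a word over $S\times\{0,1,\dots,i-1\}$ (the second component is a collapse link to the index of a stack below). The empty order-2 stack is $[[\,]]$ (one empty order-1 stack). Operations: $\uparrow_2$ (order-2 push) duplicates the topmost stack: $[[u_1]\cdots[u_n]]\mapsto[[u_1]\cdots[u_n][u_n]]$; $\downarrow_2$ (order-2 pop) removes the topmost stack, undefined if $n=1$; $\uparrow_1$ (order-1 push of some symbol $s$, the symbol being irrelevant here) maps $[[u_1]\cdots[u_n]]$ to $[[u_1]\cdots[u_n(s,n-1)]]$; $\downarrow_1$ (order-1 pop) removes the last letter of $u_n$, undefined if $u_n$ is empty; $\Downarrow$ (collapse): if $u_n=u_n'(s,i)$ then $[[u_1]\cdots[u_n]]\mapsto[[u_1]\cdots[u_i]]$ (undefined if $u_n$ empty or $i=0$). For a valid sequence and $0\le j\le n$, $\mathsf{push}_1(j)$ is the position $i$ of the $\uparrow_1$ operation that pushed the top symbol of the top order-1 stack present after executing $\mathsf{op}_j$, and $\mathsf{push}_1(j)=-1$ if that top order-1 stack is empty; $\mathsf{Push}_2(j)$ is the position of the $\uparrow_2$ operation that pushed (duplicated) the top order-1 stack present after executing $\mathsf{op}_j$, and $\mathsf{Push}_2(j)=-1$ if the order-2 stack then contains only one order-1 stack. *)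

(* Defs.v *)
From mathcomp Require Import all_boot all_algebra.
Set Implicit Arguments. Unset Strict Implicit. Unset Printing Implicit Defensive.

(* Order-2 collapsible stacks, with the (irrelevant) stack symbol dropped.
   An order-1 stack is a list of letters (link, origin), HEAD = TOP, where
   link = collapse link (index of a stack below, 1-based as in the paper)
   and origin = position of the up_1 operation that pushed that letter
   (copies made by up_2 keep the origin of the original letter).
   An order-2 stack is a list of (tag, order-1 stack), HEAD = TOP, where
   tag = Some i if that order-1 stack was created by the up_2 at position i,
   and None for the bottom (initial) order-1 stack. *)

Inductive Op := Up1 | Up2 | Down1 | Down2 | Collapse.

Definition stk1 := seq (nat * nat).
Definition stk2 := seq (option nat * stk1).

Definition empty2 : stk2 := [:: (None, [::])].

Definition step (p : nat) (o : Op) (W : stk2) : option stk2 :=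
  match W with
  | [::] => None
  | (t, u) :: rest =>
    match o with
    | Up1 => Some ((t, ((size W).-1, p) :: u) :: rest)
    | Up2 => Some ((Some p, u) :: (t, u) :: rest)
    | Down1 => if u is _ :: u' then Some ((t, u') :: rest) else None
    | Down2 => if rest is [::] then None else Some rest
    | Collapse =>
        match u with
        | [::] => None
        | (i, _) :: _ => if i == 0 then None else Some (drop (size W - i) W)
        end
    end
  end.

Fixpoint run_from (p : nat) (W : stk2) (ops : seq Op) : option stk2 :=
  match ops with
  | [::] => Some W
  | o :: os => match step p o W with
               | None => None
               | Some W' => run_from p.+1 W' os
               end
  end.

Definition run (ops : seq Op) : option stk2 := run_from 0 empty2 ops.

(* valid: every step is defined (run fails permanently once undefined) *)
Definition valid (ops : seq Op) : Prop := run ops <> None.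

Definition push1 (ops : seq Op) (j : nat) : int :=
  match run (take j.+1 ops) with
  | Some ((_, (_, p) :: _) :: _) => Posz p
  | _ => (-1)%R
  end.

Definition Push2 (ops : seq Op) (j : nat) : int :=
  match run (take j.+1 ops) with
  | Some W => if size W == 1 then (-1)%R else
              match W with
              | (Some p, _) :: _ => Posz p
              | _ => (-1)%R
              end
  | None => (-1)%R
  end.

Inductive L1 : seq Op -> Prop :=
| L1_up1 : L1 [:: Up1]
| L1_up2 w : L1 w -> L1 (w ++ [:: Up2])
| L1_down1 w1 w2 : L1 w1 -> L1 w2 -> L1 (w1 ++ w2 ++ [:: Down1])
| L1_down2 w1 w2 : L1 w1 -> L2 w2 -> L1 (w1 ++ w2 ++ [:: Down2])
| L1_col w1 w2 w3 : L1 w1 -> L2 w2 -> L1 w3 -> L1 (w1 ++ w2 ++ w3 ++ [:: Collapse])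
with L2 : seq Op -> Prop :=
| L2_up2 : L2 [:: Up2]
| L2_up1 w : L2 w -> L2 (w ++ [:: Up1])
| L2_down1 w : L2 w -> L2 (w ++ [:: Down1])
| L2_down2 w1 w2 : L2 w1 -> L2 w2 -> L2 (w1 ++ w2 ++ [:: Down2])
| L2_col w1 w2 w3 : L2 w1 -> L2 w2 -> L1 w3 -> L2 (w1 ++ w2 ++ w3 ++ [:: Collapse]).

Definition factor (ops : seq Op) (i j : nat) : seq Op :=
  take (j - i).+1 (drop i ops).

(* Main.v *)
Require Import Defs.
From mathcomp Require Import all_boot all_algebra.
From mathcomp Require Import zify.
Set Implicit Arguments. Unset Strict Implicit.

Lemma run_from_cat p W a b : run_from p W (a ++ b) =
  match run_from p W a with Some W' => run_from (p + size a) W' b | None => None end.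
Proof.
elim: a p W => [|o a IH] p W /=; first by rewrite addn0.
case: (step p o W) => // W1. by rewrite IH addSnnS.
Qed.

Lemma run_from_catS p W a b W' : run_from p W (a ++ b) = Some W' ->
  exists W1, run_from p W a = Some W1 /\ run_from (p + size a) W1 b = Some W'.
Proof. rewrite run_from_cat; case: run_from => // W1 H; by exists W1. Qed.

Lemma run1 p W o : run_from p W [:: o] = step p o W.
Proof. by rewrite /=; case: step. Qed.

Lemma col_step k t m v (Y W : stk2) : W <> [::] ->
  step k Collapse ((t, (size W, m) :: v) :: Y ++ W) = Some W.
Proof.
case: W => // x W _ /=.
have -> : (size (Y ++ x :: W)).+1 - (size W).+1 = (size Y).+1.
  by rewrite size_cat /=; lia.
by rewrite /= drop_size_cat.
Qed.

Scheme L1_mind := Induction for L1 Sort Prop with L2_mind := Induction for L2 Sort Prop.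
Combined Scheme L12_mind from L1_mind, L2_mind.

Lemma K12 :
 (forall w, L1 w -> forall p t u rest W', run_from p ((t,u)::rest) w = Some W' ->
     exists t' Y, W' = (t', (size rest, p)::u) :: Y ++ rest) /\
 (forall w, L2 w -> forall p W W', run_from p W w = Some W' ->
     exists v, W' = (Some p, v) :: W).
Proof.
apply: L12_mind.
- move=> p t u rest W' /= [<-]; by exists t, [::].
- move=> w _ IH p t u rest W' /run_from_catS [W1 [/IH [t' [Y ->]]]].
  rewrite run1 /= => -[<-].
  by exists (Some (p + size w)), ((t', (size rest, p) :: u) :: Y).
- move=> w1 w2 _ IH1 _ IH2 p t u rest W' /run_from_catS [W1 [/IH1 [t1 [Y1 ->]]]].
  move=> /run_from_catS [W2 [/IH2 [t2 [Y2 ->]]]].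
  rewrite run1 /= => -[<-].
  by exists t2, (Y2 ++ Y1); rewrite catA.
- move=> w1 w2 _ IH1 _ IH2 p t u rest W' /run_from_catS [W1 [/IH1 [t1 [Y1 ->]]]].
  move=> /run_from_catS [W2 [/IH2 [v ->]]].
  rewrite run1 /= => -[<-].
  by exists t1, Y1.
- move=> w1 w2 w3 _ IH1 _ IH2 _ IH3 p t u rest W' /run_from_catS [W1 [H1]].
  move: (H1) => /IH1 [t1 [Y1 E1]].
  move=> /run_from_catS [W2 [/IH2 [v ->]]].
  move=> /run_from_catS [W3 [/IH3 [t3 [Y3 ->]]]].
  rewrite run1 col_step; last by rewrite E1.
  move=> [<-]; by exists t1, Y1.
- move=> p W W'; case: W => // [[t u] W] /= [<-]; by exists u.
- move=> w _ IH p W W' /run_from_catS [W1 [/IH [v ->]]].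
  rewrite run1 /= => -[<-]; by eexists.
- move=> w _ IH p W W' /run_from_catS [W1 [/IH [v ->]]].
  rewrite run1 /=; case: v => // x v [<-]; by eexists.
- move=> w1 w2 _ IH1 _ IH2 p W W' /run_from_catS [W1 [/IH1 [v ->]]].
  move=> /run_from_catS [W2 [/IH2 [v2 ->]]].
  rewrite run1 /= => -[<-]; by eexists.
- move=> w1 w2 w3 _ IH1 _ IH2 _ IH3 p W W' /run_from_catS [W1 [/IH1 [v E1]]].
  move=> /run_from_catS [W2 [/IH2 [v2 ->]]].
  move=> /run_from_catS [W3 [/IH3 [t3 [Y3 ->]]]].
  rewrite run1 col_step; last by rewrite E1.
  move=> [<-]; by exists v.
Qed.

Definition good (W : stk2) : Prop :=
  W <> [::] /\ forall k, k.+1 < size W -> (nth (None, [::]) W k).1 <> None.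

Lemma good_drop W n : good W -> n < size W -> good (drop n W).
Proof.
move=> [_ H] Hn; split.
  by move=> E; have := size_drop n W; rewrite E /=; lia.
move=> k; rewrite size_drop nth_drop => Hk; apply: H; lia.
Qed.

Lemma good_cons p u W : good W -> good ((Some p, u) :: W).
Proof.
move=> [Hne H]; split => // -[|k] //= Hk; exact: H.
Qed.

Lemma good_head t u u' rest : good ((t,u)::rest) -> good ((t,u')::rest).
Proof. by move=> [_ H]; split => // -[|k] Hk; [exact: (H 0) | exact: (H k.+1)]. Qed.

Lemma good_tail x rest : good (x::rest) -> rest <> [::] -> good rest.
Proof. move=> [_ H] Hne; split => // k Hk; exact: (H k.+1). Qed.

Lemma good_top (W : stk2) : good W -> 1 < size W -> exists q u W', W = (Some q, u) :: W'.
Proof.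
move=> [_ H] Hs; move: (H 0 Hs); case: W {H} Hs => // -[[q|] u] W //= _ _.
by exists q, u, W.
Qed.

Lemma step_good p o W W' : good W -> step p o W = Some W' -> good W'.
Proof.
case: W => [[]//|[t u] rest] Hg.
case: o => /=.
- move=> [<-]; exact: good_head Hg.
- move=> [<-]; exact: good_cons.
- case: u Hg => // l u Hg [<-]; exact: good_head Hg.
- case: rest Hg => // x rest Hg [<-]; exact: (@good_tail (t,u) (x::rest) Hg).
- case: u Hg => // -[i m] u Hg; case: eqP => // Hi [<-].
  apply: good_drop => //=; lia.
Qed.

Lemma run_good p W w W' : good W -> run_from p W w = Some W' -> good W'.
Proof.
elim: w p W => [|o w IH] p W /= Hg; first by move=> [<-].
case E: step => [W1|] // H; apply: IH H; exact: step_good E.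
Qed.

Definition st (ops : seq Op) i := run (take i ops).
Definition fac (ops : seq Op) p q := drop p (take q ops).

Lemma good_empty : good empty2.
Proof. by split => // -[|k]. Qed.

Lemma st_some ops i : valid ops -> i <= size ops -> exists W, st ops i = Some W /\ good W.
Proof.
rewrite /valid /st /run => Hv Hi.
have: run_from 0 empty2 (take i ops ++ drop i ops) <> None by rewrite cat_take_drop.
rewrite run_from_cat.
case E: run_from => [W|] // _; exists W; split => //.
exact: (run_good good_empty E).
Qed.

Lemma take_fac ops r q : r <= q -> take q ops = take r ops ++ fac ops r q.
Proof.
move=> Hrq; rewrite /fac -{1}(cat_take_drop r (take q ops)) take_takel //.
Qed.

Lemma st_split ops r q W : r <= q -> q <= size ops -> st ops r = Some W ->
  st ops q = run_from r W (fac ops r q).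
Proof.
move=> Hrq Hq Hr; rewrite /st /run (take_fac ops Hrq) run_from_cat.
move: Hr; rewrite /st /run => ->; rewrite size_takel //; lia.
Qed.

Lemma fac_cat ops p r q : p <= r -> r <= q -> q <= size ops -> fac ops p q = fac ops p r ++ fac ops r q.
Proof.
move=> Hpr Hrq Hq; rewrite {1}/fac (take_fac ops Hrq) drop_cat.
case: (ltnP p (size (take r ops))) => H.
  rewrite /fac //.
have Hs : size (take r ops) = p.
  move: H; rewrite size_takel; lia.
by rewrite /fac Hs subnn drop0 (@drop_oversize _ p (take r ops)) ?Hs.
Qed.

Lemma fac1 ops j : j < size ops -> fac ops j j.+1 = [:: nth Up1 ops j].
Proof.
move=> Hj; rewrite /fac (take_nth Up1 Hj) -cats1 drop_size_cat //.
by rewrite size_takel //; lia.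
Qed.

Lemma factor_fac ops i j : i <= j -> factor ops i j = fac ops i j.+1.
Proof. move=> H; rewrite /factor take_drop /fac; congr (drop _ (take _ _)); lia. Qed.

Definition top1 (W : stk2) : int :=
  match W with (_, (_, p) :: _) :: _ => Posz p | _ => (-1)%R end.
Definition top2 (W : stk2) : int :=
  if size W == 1 then (-1)%R else
  match W with (Some p, _) :: _ => Posz p | _ => (-1)%R end.

Lemma push1E ops j : push1 ops j = oapp top1 (-1)%R (st ops j.+1).
Proof. rewrite /push1 /st. by case: run => [[|[t [|[a p] u]] W]|]. Qed.

Lemma Push2E ops j : Push2 ops j = oapp top2 (-1)%R (st ops j.+1).
Proof. rewrite /Push2 /st. by case: run. Qed.

Lemma K1st ops r j t u rest W : r <= j -> j <= size ops ->
  st ops r = Some ((t,u)::rest) -> st ops j = Some W -> L1 (fac ops r j) ->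
  exists t' Y, W = (t', (size rest, r)::u) :: Y ++ rest.
Proof.
move=> Hrj Hj Hr Hw HL; apply: (proj1 K12 _ HL r t u rest W).
by rewrite -(st_split Hrj Hj Hr).
Qed.

Lemma K2st ops r j Wr W : r <= j -> j <= size ops ->
  st ops r = Some Wr -> st ops j = Some W -> L2 (fac ops r j) ->
  exists v, W = (Some r, v) :: Wr.
Proof.
move=> Hrj Hj Hr Hw HL; apply: (proj2 K12 _ HL r Wr W).
by rewrite -(st_split Hrj Hj Hr).
Qed.

Definition Qat ops i := forall W, st ops i = Some W ->
 (forall p, top1 W = Posz p -> p < i /\ L1 (fac ops p i)) /\
 (forall q, top2 W = Posz q -> q < i /\ L2 (fac ops q i)).

Lemma top2_some q u (W : stk2) : W <> [::] -> top2 ((Some q,u)::W) = Posz q.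
Proof. by case: W. Qed.

Lemma mainQ ops : valid ops -> forall i, i <= size ops -> Qat ops i.
Proof.
move=> Hv; elim/ltn_ind => -[|j] IH Hi.
  move=> W; rewrite /st take0 /= => -[<-]; by split.
have Hj : j < size ops by [].
have IHat : forall m, m <= j -> forall W, st ops m = Some W ->
 (forall p, top1 W = Posz p -> p < m /\ L1 (fac ops p m)) /\
 (forall q, top2 W = Posz q -> q < m /\ L2 (fac ops q m)).
  move=> m Hm; apply: IH; lia.
have [Wj [Ej Gj]] := st_some Hv (ltnW Hi).
move=> W' E'.
have Hs : step j (nth Up1 ops j) Wj = Some W'.
  by rewrite -run1 -(fac1 Hj) -(st_split (leqnSn j) Hi Ej).
have Hfac : forall p, p <= j -> fac ops p j.+1 = fac ops p j ++ [:: nth Up1 ops j].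
  by move=> p Hp; rewrite (fac_cat Hp (leqnSn j) Hi) fac1.
have IHj := IHat j (leqnn j) Wj Ej.
have [t [u [rest EW]]] : exists t u rest, Wj = (t,u)::rest.
  by case: Wj Gj {Ej Hs IHj} => [[]//|[t u] rest]; exists t, u, rest.
subst Wj.
case Eo: (nth Up1 ops j) Hs Hfac => Hs Hfac.
-
  case: Hs => <-; split.
  + move=> p /= [<-]; split => //; rewrite fac1 // Eo; exact: L1_up1.
  + move=> q Hq; have [Hqj HL] := IHj.2 q Hq; split; first lia.
    rewrite Hfac; [exact: L2_up1 | lia].
-
  case: Hs => <-; split.
  + move=> p Hp; have [Hpj HL] := IHj.1 p Hp; split; first lia.
    rewrite Hfac; [exact: L1_up2 | lia].
  + move=> q /= [<-]; split => //; rewrite fac1 // Eo; exact: L2_up2.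
-
  case: u Hs IHj Ej Gj => [//|[b r] u] /= [<-] IHj Ej Gj; split; last first.
  + move=> q Hq; have [Hqj HL] := IHj.2 q Hq; split; first lia.
    rewrite Hfac; [exact: L2_down1 | lia].
  move=> p Hp.
  have [Hrj HLr] := IHj.1 r erefl.
  have [Wr [Er Gr]] := st_some Hv (leq_trans (ltnW Hrj) (ltnW Hi)).
  have [tr [ur [restr EWr]]] : exists t u rest, Wr = (t,u)::rest.
    by case: Wr Gr {Er} => [[]//|[t' u'] rest']; exists t', u', rest'.
  subst Wr.
  have [t' [Y E]] := K1st (ltnW Hrj) (ltnW Hi) Er Ej HLr.
  case: E => _ _ Eu _; subst u.
  have [Hpr HLp] := (IHat r (ltnW Hrj) _ Er).1 p Hp.
  split; first lia.
  rewrite Hfac; last lia.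
  rewrite (fac_cat (ltnW Hpr) (ltnW Hrj) (ltnW Hi)) -catA.
  exact: L1_down1.
-
  case: rest Gj Ej IHj Hs => [//|x rest] Gj Ej IHj /= [<-].
  have [q [v [W0 E0]]] := good_top Gj erefl.
  case: E0 => Et _ _; subst t.
  have [Hqj HLq] := IHj.2 q erefl.
  have [Wq [Eq Gq]] := st_some Hv (leq_trans (ltnW Hqj) (ltnW Hi)).
  have [v' E] := K2st (ltnW Hqj) (ltnW Hi) Eq Ej HLq.
  case: E => _ E; subst Wq.
  have IHq := IHat q (ltnW Hqj) _ Eq.
  split.
  + move=> p Hp; have [Hpq HLp] := IHq.1 p Hp; split; first lia.
    rewrite Hfac; last lia.
    rewrite (fac_cat (ltnW Hpq) (ltnW Hqj) (ltnW Hi)) -catA.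
    exact: L1_down2.
  + move=> p Hp; have [Hpq HLp] := IHq.2 p Hp; split; first lia.
    rewrite Hfac; last lia.
    rewrite (fac_cat (ltnW Hpq) (ltnW Hqj) (ltnW Hi)) -catA.
    exact: L2_down2.
-
  case: u Hs IHj Ej Gj => [//|[a r] u] Hs IHj Ej Gj.
  have [Hrj HLr] := IHj.1 r erefl.
  have [Wr [Er Gr]] := st_some Hv (leq_trans (ltnW Hrj) (ltnW Hi)).
  have [tr [ur [restr EWr]]] : exists t u rest, Wr = (t,u)::rest.
    by case: Wr Gr {Er} => [[]//|[t' u'] rest']; exists t', u', rest'.
  subst Wr.
  have [t' [Y E]] := K1st (ltnW Hrj) (ltnW Hi) Er Ej HLr.
  case: E => Et Ea Eu Erest; subst t a u rest.
  have Hne : restr <> [::] by move=> E; move: Hs; rewrite E.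
  rewrite col_step // in Hs; case: Hs => <-.
  have Hsz : 1 < size ((tr, ur)::restr) by move: Hne; case: (restr).
  have [q [v [W0 E0]]] := good_top Gr Hsz.
  case: E0 => Et _ _; subst tr.
  have [Hqr HLq] := (IHat r (ltnW Hrj) _ Er).2 q (top2_some _ _ Hne).
  have [Wq [Eq Gq]] := st_some Hv (leq_trans (ltnW Hqr) (leq_trans (ltnW Hrj) (ltnW Hi))).
  have [v' E] := K2st (ltnW Hqr) (leq_trans (ltnW Hrj) (ltnW Hi)) Eq Er HLq.
  case: E => _ E; subst Wq.
  have IHq := IHat q (ltnW (ltn_trans Hqr Hrj)) _ Eq.
  split.
  + move=> p Hp; have [Hpq HLp] := IHq.1 p Hp; split; first lia.
    rewrite Hfac; last lia.
    rewrite (fac_cat (ltnW Hpq) (ltnW (ltn_trans Hqr Hrj)) (ltnW Hi)).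
    rewrite (fac_cat (ltnW Hqr) (ltnW Hrj) (ltnW Hi)) -!catA.
    exact: L1_col.
  + move=> p Hp; have [Hpq HLp] := IHq.2 p Hp; split; first lia.
    rewrite Hfac; last lia.
    rewrite (fac_cat (ltnW Hpq) (ltnW (ltn_trans Hqr Hrj)) (ltnW Hi)).
    rewrite (fac_cat (ltnW Hqr) (ltnW Hrj) (ltnW Hi)) -!catA.
    exact: L2_col.
Qed.

Lemma push1_cases ops j : push1 ops j = (-1)%R \/ exists p, push1 ops j = Posz p.
Proof. rewrite /push1; case: run => [[|[t [|[a p] u]] W]|]; by [left | right; exists p]. Qed.

Lemma Push2_cases ops j : Push2 ops j = (-1)%R \/ exists p, Push2 ops j = Posz p.
Proof. rewrite /Push2; case: run => [W|]; last by left.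
case: ifP => _; first by left. case: W => [|[[p|] u] W]; by [left | right; exists p]. Qed.

Lemma fwd1 ops j p : valid ops -> j < size ops -> push1 ops j = Posz p -> p <= j /\ L1 (factor ops p j).
Proof.
move=> Hv Hj; have [W [EW _]] := st_some Hv Hj.
rewrite push1E EW /= => /((mainQ Hv Hj EW).1) [Hp HL].
by split => //; rewrite factor_fac.
Qed.

Lemma fwd2 ops j p : valid ops -> j < size ops -> Push2 ops j = Posz p -> p <= j /\ L2 (factor ops p j).
Proof.
move=> Hv Hj; have [W [EW _]] := st_some Hv Hj.
rewrite Push2E EW /= => /((mainQ Hv Hj EW).2) [Hp HL].
by split => //; rewrite factor_fac.
Qed.

Lemma bwd1 ops i j : valid ops -> i <= j -> j < size ops -> L1 (factor ops i j) -> push1 ops j = Posz i.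
Proof.
move=> Hv Hij Hj; rewrite factor_fac // => HL.
have [W [EW _]] := st_some Hv Hj.
have [Wi [Ei Gi]] := st_some Hv (leq_trans Hij (ltnW Hj)).
have [t [u [rest E]]] : exists t u rest, Wi = (t,u)::rest.
  by case: Wi Gi {Ei} => [[]//|[t' u'] rest']; exists t', u', rest'.
subst Wi.
have [t' [Y E]] := K1st (leq_trans Hij (leqnSn j)) Hj Ei EW HL.
by rewrite push1E EW E.
Qed.

Lemma bwd2 ops i j : valid ops -> i <= j -> j < size ops -> L2 (factor ops i j) -> Push2 ops j = Posz i.
Proof.
move=> Hv Hij Hj; rewrite factor_fac // => HL.
have [W [EW _]] := st_some Hv Hj.
have [Wi [Ei Gi]] := st_some Hv (leq_trans Hij (ltnW Hj)).
have [v E] := K2st (leq_trans Hij (leqnSn j)) Hj Ei EW HL.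
by rewrite Push2E EW E /= top2_some //; case: Gi.
Qed.

Unset Implicit Arguments. Set Strict Implicit.

Theorem proposition1 (ops : seq Op) :
  0 < size ops -> valid ops ->
  forall i j : nat, i <= j -> j < size ops ->
    (push1 ops j = Posz i <-> L1 (factor ops i j)) /\
    (Push2 ops j = Posz i <-> L2 (factor ops i j)) /\
    (push1 ops j = (-1)%R <-> (forall k, k <= j -> ~ L1 (factor ops k j))) /\
    (Push2 ops j = (-1)%R <-> (forall k, k <= j -> ~ L2 (factor ops k j))).
Proof.
move=> _ Hv i j Hij Hj; split; [|split; [|split]].
- split; [by move=> /(fwd1 Hv Hj) [] | exact: bwd1].
- split; [by move=> /(fwd2 Hv Hj) [] | exact: bwd2].
- split.
  + by move=> H k Hk /(bwd1 Hv Hk Hj); rewrite H.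
  + move=> H; case: (push1_cases ops j) => // -[p Hp].
    by have [Hpj HL] := fwd1 Hv Hj Hp; case: (H p Hpj HL).
- split.
  + by move=> H k Hk /(bwd2 Hv Hk Hj); rewrite H.
  + move=> H; case: (Push2_cases ops j) => // -[p Hp].
    by have [Hpj HL] := fwd2 Hv Hj Hp; case: (H p Hpj HL).
Qed.
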